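(* Assume (H1), (H2.3) and (H2.4). Then $(I_{X^{+}}-\mathcal{F}_{s}V^{+})|_{\widehat{X}^{+}}$, regarded as an operator from $\widehat{X}^{+}$ to $\widehat{X}^{+}$ (with the norm of $\widehat{X}^{+}$), is invertible with bounded inverse.
   Context: Let $d\ge 1$ be an integer and $\tau>0$, $h>0$ real. $X$, $X^{+}$, $X^{\pm}$ are real normed spaces of functions $[-\tau,0]\to\mathbb{R}^{d}$, $[0,h]\to\mathbb{R}^{d}$, $[-\tau,h]\to\mathbb{R}^{d}$, respectively. $V\colon X\times X^{+}\to X^{\pm}$ and $\mathcal{F}_{s}\colon X^{\pm}\to X^{+}$ are linear; $V^{+}z:=V(0_{X},z)$. Hypotheses: (H1) $I_{X^{+}}-\mathcal{F}_{s}V^{+}\colon X^{+}\to X^{+}$ is invertible with bounded inverse and for each $\phi\in X$ the equation $z=\mathcal{F}_{s}V(\phi,z)$ has a unique solution in $X^{+}$. There is a linear subspace $\widehat{X}^{+}\subseteq X^{+}$ with a norm $\|\cdot\|_{\widehat{X}^{+}}$ making it complete such that (H2.3) there is $\hat{c}_{1}>0$ with $\|z\|_{X^{+}}\le\hat{c}_{1}\|z\|_{\widehat{X}^{+}}$ for all $z\in\widehat{X}^{+}$, and (H2.4) the range of $\mathcal{F}_{s}V^{+}\colon X^{+}\to X^{+}$ is contained in $\widehat{X}^{+}$ and $\mathcal{F}_{s}V^{+}\colon X^{+}\to\widehat{X}^{+}$ is bounded. *)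

(* Defs.v *)
From HB Require Import structures.
From mathcomp Require Import all_boot all_order all_algebra.
From mathcomp Require Import all_classical all_reals topology normedtype.
Set Implicit Arguments. Unset Strict Implicit. Unset Printing Implicit Defensive.
Import Order.TTheory GRing.Theory Num.Theory.
Import numFieldNormedType.Exports.
Local Open Scope ring_scope.

Definition Vplus (R : realType) (X Xp Xpm : normedModType R)
  (V : X * Xp -> Xpm) (z : Xp) : Xpm := V (0, z).

Definition bounded_op (R : realType) (A B : normedModType R) (f : A -> B) : Prop :=
  exists c : R, forall x : A, `|f x| <= c * `|x|.

(* Main.v *)
Require Import Defs.
From HB Require Import structures.
From mathcomp Require Import all_boot all_order all_algebra.
From mathcomp Require Import all_classical all_reals topology normedtype.
Import Order.TTheory GRing.Theory Num.Theory.
Import numFieldNormedType.Exports.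
Local Open Scope ring_scope.
Set Implicit Arguments.

Definition mklin (R : pzRingType) (U V : lmodType R) (f : U -> V) (H : linear f) : U -> V := f.
HB.instance Definition _ (R : pzRingType) (U V : lmodType R) (f : U -> V) (H : linear f) :=
  GRing.isLinear.Build R U V *:%R (mklin H) H.

Lemma Vplus_lin (R : realType) (X Xp Xpm : normedModType R)
  (V : {linear (X * Xp)%type -> Xpm}) : linear (Vplus V).
Proof.
move=> a z w; rewrite /Vplus.
have -> : ((0 : X), a *: z + w) = a *: ((0 : X), z) + ((0 : X), w).
  by apply/eqP; rewrite xpair_eqE /= scaler0 addr0 !eqxx.
by rewrite linearP.
Qed.

Theorem lemma4p6 (R : realType) (X Xp Xpm : normedModType R)
  (V : {linear (X * Xp)%type -> Xpm}) (Fs : {linear Xpm -> Xp})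
  (Xhat : completeNormedModType R) (j : {linear Xhat -> Xp})
  (j_inj : injective j) :
  (* (H1) *)
  (exists C : {linear Xp -> Xp},
      (forall z, C (z - Fs (Vplus V z)) = z) /\
      (forall z, C z - Fs (Vplus V (C z)) = z) /\
      bounded_op C) ->
  (forall phi : X, exists! z : Xp, z = Fs (V (phi, z))) ->
  (* (H2.3) *)
  (exists c1 : R, 0 < c1 /\ forall y : Xhat, `|j y| <= c1 * `|y|) ->
  (* (H2.4): range of Fs V^+ lies in Xhat, and Fs V^+ : Xp -> Xhat is bounded *)
  (exists G : Xp -> Xhat,
      (forall z, j (G z) = Fs (Vplus V z)) /\ bounded_op G) ->
  (* conclusion: the restriction to Xhat, as an operator Xhat -> Xhat,
     has a bounded (linear) two-sided inverse B *)
  exists B : {linear Xhat -> Xhat},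
    (forall y : Xhat, j (B y) - Fs (Vplus V (j (B y))) = j y) /\
    (forall y y' : Xhat, j y' = j y - Fs (Vplus V (j y)) -> B y' = y) /\
    bounded_op B.
Proof.
move=> [C [HC1 [HC2 [cC HcC]]]] _ [c1 [c1pos Hj]] [G [HG [cG HcG]]].
have Glin : linear G.
  move=> a z w; apply: j_inj.
  by rewrite linearP !HG Vplus_lin linearP.
have Blin : linear (fun y => y + G (C (j y))).
  move=> a y w /=.
  by rewrite !linearP Glin scalerDr addrACA.
exists (mklin Blin); split; [|split].
- move=> y; rewrite /mklin /=.
  have E : j (y + G (C (j y))) = C (j y).
    by rewrite linearD HG -{1}(HC2 (j y)) subrK.
  by rewrite E HC2.
- move=> y y' Hy; change (y' + G (C (j y')) = y); rewrite Hy HC1.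
  by apply: j_inj; rewrite linearD HG Hy subrK.
- exists (1 + `|cG| * `|cC| * c1) => y; rewrite /mklin /=.
  apply: (le_trans (ler_normD _ _)).
  rewrite mulrDl mul1r lerD2l.
  apply: (le_trans (HcG _)).
  apply: (le_trans (ler_wpM2r (normr_ge0 _) (ler_norm cG))).
  rewrite -!mulrA ler_wpM2l //.
  apply: (le_trans (HcC _)).
  apply: (le_trans (ler_wpM2r (normr_ge0 _) (ler_norm cC))).
  by rewrite ler_wpM2l.
Qed.
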